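(* Let $\mathfrak{g}$ be a Leibniz algebra, $\mathfrak{b}$ a two-sided ideal of $\mathfrak{g}$, and $\mathfrak{a}=\mathfrak{g}/\mathfrak{b}$. Then there exist a Leibniz algebra $\mathfrak{q}$ and a two-sided ideal $\mathfrak{m}$ of $\mathfrak{q}$ such that: (a) $[\mathfrak{g},\mathfrak{g}]_{\mathrm{Lie}}\cap\mathfrak{b}\cong \mathfrak{q}/\mathfrak{m}$; (b) $\mathfrak{m}\cong\mathcal{M}^{\mathrm{Lie}}(\mathfrak{g})$; (c) $\mathcal{M}^{\mathrm{Lie}}(\mathfrak{a})$ is an epimorphic image of $\mathfrak{q}$.
   Context: Fix a field $\mathbb{K}$ with $\frac12\in\mathbb{K}$. A Leibniz algebra is a $\mathbb{K}$-vector space with a bilinear bracket satisfying $[x,[y,z]]=[[x,y],z]-[[x,z],y]$. For two-sided ideals $\mathfrak{m},\mathfrak{n}$, $[\mathfrak{m},\mathfrak{n}]_{\mathrm{Lie}}$ is the subspace spanned by all $[m,n]+[n,m]$, $m\in\mathfrak{m},n\in\mathfrak{n}$. For a Leibniz algebra $\mathfrak{g}$ with a free presentation $0\to\mathfrak{r}\to\mathfrak{f}\to\mathfrak{g}\to0$ ($\mathfrak{f}$ a free Leibniz algebra, $\mathfrak{r}$ the kernel), the Schur $\mathrm{Lie}$-multiplier is $\mathcal{M}^{\mathrm{Lie}}(\mathfrak{g})=\frac{\mathfrak{r}\cap[\mathfrak{f},\mathfrak{f}]_{\mathrm{Lie}}}{[\mathfrak{f},\mathfrak{r}]_{\mathrm{Lie}}}$;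 up to isomorphism it does not depend on the chosen free presentation. *)

(* Defs.v *)
From mathcomp Require Import all_boot all_algebra.
From Stdlib Require Import ClassicalEpsilon.

Set Implicit Arguments.
Unset Strict Implicit.
Unset Printing Implicit Defensive.

Import GRing.Theory.
Local Open Scope ring_scope.

Record alg (K : fieldType) := Alg {
  car :> Type;
  azero : car;
  aadd : car -> car -> car;
  aopp : car -> car;
  ascale : K -> car -> car;
  abr : car -> car -> car
}.

Arguments azero {K A} : rename.
Arguments aadd {K A} : rename.
Arguments aopp {K A} : rename.
Arguments ascale {K A} : rename.
Arguments abr {K A} : rename.

Section Defs.
Variable K : fieldType.

Definition is_leibniz (A : alg K) : Prop :=
  (forall x y z : A, aadd x (aadd y z) = aadd (aadd x y) z) /\
  (forall x y : A, aadd x y = aadd y x) /\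
  (forall x : A, aadd azero x = x) /\
  (forall x : A, aadd (aopp x) x = azero) /\
  (forall (a b : K) (x : A), ascale a (ascale b x) = ascale (a * b) x) /\
  (forall x : A, ascale 1 x = x) /\
  (forall (a : K) (x y : A), ascale a (aadd x y) = aadd (ascale a x) (ascale a y)) /\
  (forall (a b : K) (x : A), ascale (a + b) x = aadd (ascale a x) (ascale b x)) /\
  (forall x y z : A, abr (aadd x y) z = aadd (abr x z) (abr y z)) /\
  (forall x y z : A, abr x (aadd y z) = aadd (abr x y) (abr x z)) /\
  (forall (a : K) (x y : A), abr (ascale a x) y = ascale a (abr x y)) /\
  (forall (a : K) (x y : A), abr x (ascale a y) = ascale a (abr x y)) /\
  (forall x y z : A,
      abr x (abr y z) = aadd (abr (abr x y) z) (aopp (abr (abr x z) y))).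

Definition is_subspace (A : alg K) (S : A -> Prop) : Prop :=
  S azero /\ (forall x y, S x -> S y -> S (aadd x y)) /\
  (forall a x, S x -> S (ascale a x)).

Definition is_ideal (A : alg K) (I : A -> Prop) : Prop :=
  is_subspace I /\ (forall x y, I y -> I (abr x y)) /\
  (forall x y, I x -> I (abr x y)).

Lemma ideal_zero (A : alg K) (I : A -> Prop) : is_ideal I -> I azero.
Proof. by case=> [[]]. Qed.

Inductive span (A : alg K) (X : A -> Prop) : A -> Prop :=
| span_in x : X x -> span X x
| span_zero : span X azero
| span_add x y : span X x -> span X y -> span X (aadd x y)
| span_scale a x : span X x -> span X (ascale a x).

Definition lie_br (A : alg K) (M N : A -> Prop) : A -> Prop :=
  span (fun z => exists x y, M x /\ N y /\ z = aadd (abr x y) (abr y x)).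

Definition allA (A : alg K) : A -> Prop := fun _ => True.

Definition is_hom (A B : alg K) (f : A -> B) : Prop :=
  f azero = azero /\
  (forall x y, f (aadd x y) = aadd (f x) (f y)) /\
  (forall a x, f (ascale a x) = ascale a (f x)) /\
  (forall x y, f (abr x y) = abr (f x) (f y)).

Lemma hom_zero (A B : alg K) (f : A -> B) : is_hom f -> f azero = azero.
Proof. by case. Qed.

Definition isomorphic (A B : alg K) : Prop :=
  exists f : A -> B, is_hom f /\ bijective f.

Definition epimorphic_image_of (B A : alg K) : Prop :=
  exists f : A -> B, is_hom f /\ forall y : B, exists x, f x = y.

Section Subquot.
Variables (A : alg K) (S N : A -> Prop) (hS : S azero).

Definition cls (x : A) : A -> Prop := fun y => N (aadd y (aopp x)).

Definition sq_car := {c : A -> Prop | exists x, S x /\ c = cls x}.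

Definition sq_rep (c : sq_car) : A :=
  proj1_sig (constructive_indefinite_description _ (proj2_sig c)).

Definition sq_zero : sq_car :=
  exist _ (cls azero) (ex_intro _ azero (conj hS erefl)).

(* the class of x (x is in S in every use; junk value otherwise) *)
Definition sq_mk (x : A) : sq_car :=
  match excluded_middle_informative (S x) with
  | left h => exist _ (cls x) (ex_intro _ x (conj h erefl))
  | right _ => sq_zero
  end.

Definition subquot : alg K :=
  @Alg K sq_car sq_zero
    (fun c d => sq_mk (aadd (sq_rep c) (sq_rep d)))
    (fun c => sq_mk (aopp (sq_rep c)))
    (fun a c => sq_mk (ascale a (sq_rep c)))
    (fun c d => sq_mk (abr (sq_rep c) (sq_rep d))).
End Subquot.

Definition quotient (A : alg K) (I : A -> Prop) : alg K :=
  @subquot A (@allA A) I Logic.I.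

Definition subalg (A : alg K) (S : A -> Prop) (hS : S azero) : alg K :=
  @subquot A S (fun x => x = azero) hS.

Definition is_free (X : Type) (F : alg K) (i : X -> F) : Prop :=
  is_leibniz F /\
  forall H : alg K, is_leibniz H -> forall h : X -> H,
    exists! phi : F -> H, is_hom phi /\ (forall x, phi (i x) = h x).

Record free_pres (g : alg K) := FreePres {
  fp_X : Type;
  fp_F : alg K;
  fp_i : fp_X -> fp_F;
  fp_free : is_free fp_i;
  fp_pi : fp_F -> g;
  fp_hom : is_hom fp_pi;
  fp_surj : forall y : g, exists x, fp_pi x = y
}.

Definition fp_R (g : alg K) (P : free_pres g) : fp_F P -> Prop :=
  fun x : fp_F P => fp_pi x = azero.
Arguments fp_R : clear implicits.

Definition schur_lie (g : alg K) (P : free_pres g) : alg K :=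
  @subquot (fp_F P)
    (fun x => fp_R g P x /\ lie_br (@allA _) (@allA _) x)
    (lie_br (@allA _) (fp_R g P))
    (conj (hom_zero (fp_hom P)) (span_zero _)).

End Defs.

(* Main.v *)
Require Import Defs.
From mathcomp Require Import all_boot all_algebra.
From Stdlib Require Import ClassicalEpsilon FunctionalExtensionality PropExtensionality ProofIrrelevance.
Set Implicit Arguments.
Unset Strict Implicit.
Unset Printing Implicit Defensive.
Import GRing.Theory.
Local Open Scope ring_scope.


Section AlgLemmas.
Variable K : fieldType.
Variable A : alg K.
Hypothesis hA : is_leibniz A.

Definition sub (x y : A) := aadd x (aopp y).
Definition sym (x y : A) := aadd (abr x y) (abr y x).

Lemma LaddA (x y z : A) : aadd x (aadd y z) = aadd (aadd x y) z.
Proof. by case: hA => H _; apply: H. Qed.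
Lemma LaddC (x y : A) : aadd x y = aadd y x.
Proof. by case: hA => _ [H _]; apply: H. Qed.
Lemma Ladd0 (x : A) : aadd azero x = x.
Proof. by case: hA => _ [_ [H _]]; apply: H. Qed.
Lemma LaddNx (x : A) : aadd (aopp x) x = azero.
Proof. by case: hA => _ [_ [_ [H _]]]; apply: H. Qed.
Lemma LscaleA (a b : K) (x : A) : ascale a (ascale b x) = ascale (a * b) x.
Proof. by case: hA => _ [_ [_ [_ [H _]]]]; apply: H. Qed.
Lemma Lscale1 (x : A) : ascale 1 x = x.
Proof. by case: hA => _ [_ [_ [_ [_ [H _]]]]]; apply: H. Qed.
Lemma LscaleDr (a : K) (x y : A) : ascale a (aadd x y) = aadd (ascale a x) (ascale a y).
Proof. by case: hA => _ [_ [_ [_ [_ [_ [H _]]]]]]; apply: H. Qed.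
Lemma LscaleDl (a b : K) (x : A) : ascale (a + b) x = aadd (ascale a x) (ascale b x).
Proof. by case: hA => _ [_ [_ [_ [_ [_ [_ [H _]]]]]]]; apply: H. Qed.
Lemma LbrDl (x y z : A) : abr (aadd x y) z = aadd (abr x z) (abr y z).
Proof. by case: hA => _ [_ [_ [_ [_ [_ [_ [_ [H _]]]]]]]]; apply: H. Qed.
Lemma LbrDr (x y z : A) : abr x (aadd y z) = aadd (abr x y) (abr x z).
Proof. by case: hA => _ [_ [_ [_ [_ [_ [_ [_ [_ [H _]]]]]]]]]; apply: H. Qed.
Lemma LbrZl (a : K) (x y : A) : abr (ascale a x) y = ascale a (abr x y).
Proof. by case: hA => _ [_ [_ [_ [_ [_ [_ [_ [_ [_ [H _]]]]]]]]]]; apply: H. Qed.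
Lemma LbrZr (a : K) (x y : A) : abr x (ascale a y) = ascale a (abr x y).
Proof. by case: hA => _ [_ [_ [_ [_ [_ [_ [_ [_ [_ [_ [H _]]]]]]]]]]]; apply: H. Qed.
Lemma Lleib (x y z : A) : abr x (abr y z) = aadd (abr (abr x y) z) (aopp (abr (abr x z) y)).
Proof. by case: hA => _ [_ [_ [_ [_ [_ [_ [_ [_ [_ [_ [_ H]]]]]]]]]]]; apply: H. Qed.

Lemma Laddx0 (x : A) : aadd x azero = x.
Proof. by rewrite LaddC Ladd0. Qed.
Lemma LaddxN (x : A) : aadd x (aopp x) = azero.
Proof. by rewrite LaddC LaddNx. Qed.
Lemma LaddKl (x y : A) : aadd (aopp x) (aadd x y) = y.
Proof. by rewrite LaddA LaddNx Ladd0. Qed.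
Lemma LaddKl' (x y : A) : aadd x (aadd (aopp x) y) = y.
Proof. by rewrite LaddA LaddxN Ladd0. Qed.
Lemma Ladd_cancel (x y z : A) : aadd x y = aadd x z -> y = z.
Proof. by move=> H; rewrite -(LaddKl x y) H LaddKl. Qed.
Lemma Lopp_unique (x y : A) : aadd x y = azero -> y = aopp x.
Proof. by move=> H; rewrite -(LaddKl x y) H Laddx0. Qed.
Lemma Lscale0l (x : A) : ascale 0 x = azero.
Proof.
apply: (@Ladd_cancel (ascale 0 x)); rewrite Laddx0 -LscaleDl.
by rewrite addr0.
Qed.
Lemma Lscale0r (a : K) : ascale a (azero : A) = azero.
Proof.
apply: (@Ladd_cancel (ascale a (azero : A))); rewrite Laddx0 -LscaleDr.
by rewrite Ladd0.
Qed.
Lemma LscaleN1 (x : A) : ascale (-1) x = aopp x.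
Proof.
apply: Lopp_unique; rewrite -{1}(Lscale1 x) -LscaleDl.
by rewrite subrr Lscale0l.
Qed.
Lemma LoppD (x y : A) : aopp (aadd x y) = aadd (aopp x) (aopp y).
Proof. by rewrite -!LscaleN1 LscaleDr. Qed.
Lemma LoppK (x : A) : aopp (aopp x) = x.
Proof. by symmetry; apply: Lopp_unique; rewrite LaddNx. Qed.
Lemma Lopp0 : aopp (azero : A) = azero.
Proof. by symmetry; apply: Lopp_unique; rewrite Ladd0. Qed.
Lemma LscaleN (a : K) (x : A) : ascale a (aopp x) = aopp (ascale a x).
Proof. by rewrite -!LscaleN1 !LscaleA mulrC. Qed.
Lemma Lbr0l (y : A) : abr azero y = azero.
Proof. by rewrite -{1}(Lscale0l (azero : A)) LbrZl Lscale0l. Qed.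
Lemma Lbr0r (y : A) : abr y azero = azero.
Proof. by rewrite -{1}(Lscale0l (azero : A)) LbrZr Lscale0l. Qed.
Lemma LbrNl (x y : A) : abr (aopp x) y = aopp (abr x y).
Proof. by rewrite -!LscaleN1 LbrZl. Qed.
Lemma LbrNr (x y : A) : abr x (aopp y) = aopp (abr x y).
Proof. by rewrite -!LscaleN1 LbrZr. Qed.
Lemma LaddACA (a b c d : A) : aadd (aadd a b) (aadd c d) = aadd (aadd a c) (aadd b d).
Proof. by rewrite -!LaddA (LaddA b c) (LaddC b c) -(LaddA c b). Qed.

Lemma Lsub_add (x y x' y' : A) : sub (aadd x y) (aadd x' y') = aadd (sub x x') (sub y y').
Proof. by rewrite /sub LoppD LaddACA. Qed.
Lemma Lsub_scale a (x x' : A) : sub (ascale a x) (ascale a x') = ascale a (sub x x').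
Proof. by rewrite /sub LscaleDr LscaleN. Qed.
Lemma Lsub_opp (x x' : A) : sub (aopp x) (aopp x') = aopp (sub x x').
Proof. by rewrite /sub LoppD. Qed.
Lemma Lsub_trans (x y z : A) : sub x z = aadd (sub x y) (sub y z).
Proof. by rewrite /sub -LaddA LaddKl. Qed.
Lemma Lsub_sym (x y : A) : sub y x = aopp (sub x y).
Proof. by rewrite /sub LoppD LoppK LaddC. Qed.
Lemma Lsubxx (x : A) : sub x x = azero.
Proof. exact: LaddxN. Qed.
Lemma Lsubx0 (x : A) : sub x azero = x.
Proof. by rewrite /sub Lopp0 Laddx0. Qed.
Lemma Lsub0_eq (x y : A) : sub x y = azero -> x = y.
Proof. by move=> H; rewrite -(LoppK y); apply: Lopp_unique; rewrite LaddC. Qed.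
Lemma Lsub_br (x y x' y' : A) :
  sub (abr x y) (abr x' y') = aadd (abr (sub x x') y) (abr x' (sub y y')).
Proof.
rewrite /sub LbrDl LbrDr LbrNl LbrNr -LaddA; congr aadd.
by rewrite LaddKl.
Qed.
Lemma Lsub_br' (x y x' y' : A) :
  sub (abr x y) (abr x' y') = aadd (abr x (sub y y')) (abr (sub x x') y').
Proof.
rewrite /sub LbrDl LbrDr LbrNl LbrNr -LaddA; congr aadd.
by rewrite LaddKl.
Qed.
Lemma Lsym_comm (x y : A) : sym x y = sym y x.
Proof. exact: LaddC. Qed.
Lemma Lsym_sub (a b c d : A) :
  sub (sym a b) (sym c d) = aadd (sym (sub a c) b) (sym c (sub b d)).
Proof. by rewrite /sym Lsub_add Lsub_br Lsub_br' LaddACA. Qed.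
Lemma Lbr_sym (z x y : A) : abr z (sym x y) = azero.
Proof.
rewrite /sym LbrDr !Lleib -LaddA LaddKl; exact: LaddxN.
Qed.
Lemma Lleib' (x y z : A) : abr (abr x y) z = aadd (abr x (abr y z)) (abr (abr x z) y).
Proof. by rewrite Lleib -LaddA LaddNx Laddx0. Qed.
Lemma Lsym_br (x y z : A) :
  abr (sym x y) z = aadd (sym (abr x z) y) (sym x (abr y z)).
Proof.
rewrite /sym LbrDl (Lleib' x y z) (Lleib' y x z).
by rewrite [RHS]LaddACA [aadd (abr (abr x z) y) _]LaddC.
Qed.
End AlgLemmas.


Definition homS (K : fieldType) (A B : alg K) (S : A -> Prop) (h : A -> B) :=
  (forall x y, S x -> S y -> h (aadd x y) = aadd (h x) (h y)) /\
  (forall a x, S x -> h (ascale a x) = ascale a (h x)) /\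
  (forall x y, S x -> S y -> h (abr x y) = abr (h x) (h y)).

Section SpanLemmas.
Variable K : fieldType.
Variable A : alg K.

Lemma span_mono (X Y : A -> Prop) x : (forall z, X z -> Y z) -> Defs.span X x -> Defs.span Y x.
Proof.
move=> XY; elim=> [z Xz||? ? _ H1 _ H2|? ? _ H].
- by constructor; apply: XY.
- exact: span_zero.
- exact: span_add.
- exact: span_scale.
Qed.

Lemma span_hom (B : alg K) (h : A -> B) (hh : is_hom h) (X : A -> Prop) (Y : B -> Prop) x :
  (forall z, X z -> Defs.span Y (h z)) -> Defs.span X x -> Defs.span Y (h x).
Proof.
case: hh => h0 [hadd [hsc _]] XY; elim=> [z Xz|||].
- exact: XY.
- by rewrite h0; apply: span_zero.
- by move=> ? ? _ ? _ ?; rewrite hadd; apply: span_add.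
- by move=> ? ? _ ?; rewrite hsc; apply: span_scale.
Qed.

Lemma lie_br_hom (B : alg K) (h : A -> B) (hh : is_hom h) (M N : A -> Prop) (M' N' : B -> Prop) x :
  (forall z, M z -> M' (h z)) -> (forall z, N z -> N' (h z)) ->
  lie_br M N x -> lie_br M' N' (h x).
Proof.
move=> HM HN; apply: span_hom => // z [u [v [Mu [Nv ->]]]].
apply: span_in; exists (h u), (h v); split; first exact: HM.
split; first exact: HN.
by case: hh => _ [hadd [_ hbr]]; rewrite hadd !hbr.
Qed.

Lemma ideal_preimage (B : alg K) (h : A -> B) (hh : is_hom h) (I : B -> Prop) :
  is_ideal I -> is_ideal (fun x => I (h x)).
Proof.
case: hh => h0 [hadd [hsc hbr]] [[I0 [Iadd Isc]] [Il Ir]].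
split; [split; [|split]|split].
- by rewrite h0.
- by move=> x y ? ?; rewrite hadd; apply: Iadd.
- by move=> a x ?; rewrite hsc; apply: Isc.
- by move=> x y ?; rewrite hbr; apply: Il.
- by move=> x y ?; rewrite hbr; apply: Ir.
Qed.

Lemma hom_homS (B : alg K) (h : A -> B) (S : A -> Prop) : is_hom h -> homS S h.
Proof. by case=> _ [hadd [hsc hbr]]; split; [|split] => *; auto. Qed.

Lemma hom_comp (B C : alg K) (h : A -> B) (k : B -> C) :
  is_hom h -> is_hom k -> is_hom (fun x => k (h x)).
Proof.
case=> h0 [hadd [hsc hbr]] [k0 [kadd [ksc kbr]]].
split; [|split; [|split]] => *.
- by rewrite h0 k0.
- by rewrite hadd kadd.
- by rewrite hsc ksc.
- by rewrite hbr kbr.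
Qed.

Hypothesis hA : is_leibniz A.

Lemma span_opp (X : A -> Prop) x : Defs.span X x -> Defs.span X (aopp x).
Proof. by move=> H; rewrite -LscaleN1 //; apply: span_scale. Qed.

Lemma br_lie_zero (M N : A -> Prop) w z : lie_br M N w -> abr z w = azero.
Proof.
elim=> [u [x [y [_ [_ ->]]]]|||].
- exact: Lbr_sym.
- exact: Lbr0r.
- by move=> ? ? _ H1 _ H2; rewrite LbrDr // H1 H2 Ladd0.
- by move=> ? ? _ H; rewrite LbrZr // H Lscale0r.
Qed.

Lemma lie_ideal_r (N : A -> Prop) (hN : forall y z, N y -> N (abr y z)) w z :
  lie_br (@allA _ A) N w -> lie_br (@allA _ A) N (abr w z).
Proof.
elim=> [u [x [y [_ [Ny ->]]]]|||].
- have := Lsym_br hA x y z; rewrite /sym => ->.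
  apply: span_add; apply: span_in.
    by exists (abr x z), y.
  by exists x, (abr y z); split => //; split => //; apply: hN.
- by rewrite Lbr0l //; apply: span_zero.
- by move=> ? ? _ H1 _ H2; rewrite LbrDl //; apply: span_add.
- by move=> ? ? _ H; rewrite LbrZl //; apply: span_scale.
Qed.

Lemma lie_sub_ideal (M I : A -> Prop) x : is_ideal I -> lie_br M I x -> I x.
Proof.
case=> [[I0 [Iadd Isc]] [Il Ir]]; elim=> [u [y [z [_ [Iz ->]]]]|||].
- by apply: Iadd; [apply: Il | apply: Ir].
- exact: I0.
- by move=> *; apply: Iadd.
- by move=> *; apply: Isc.
Qed.

Lemma subspace_opp (I : A -> Prop) x : is_subspace I -> I x -> I (aopp x).
Proof. by case=> _ [_ Isc] Ix; rewrite -LscaleN1 //; apply: Isc. Qed.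

Lemma zero_ideal : is_ideal (fun x : A => x = azero).
Proof.
split; [split; [|split]|split] => //.
- by move=> x y -> ->; rewrite Ladd0.
- by move=> a x ->; rewrite Lscale0r.
- by move=> x y ->; rewrite Lbr0r.
- by move=> x y ->; rewrite Lbr0l.
Qed.

Lemma hom_opp (B : alg K) (hB : is_leibniz B) (h : A -> B) (S : A -> Prop) x :
  homS S h -> (forall z, S z -> S (aopp z)) -> S x -> h (aopp x) = aopp (h x).
Proof. by case=> _ [hsc _] _ Sx; rewrite -LscaleN1 // hsc // LscaleN1. Qed.

Lemma hom_sub (B : alg K) (hB : is_leibniz B) (h : A -> B) (S : A -> Prop) x y :
  homS S h -> (forall z, S z -> S (aopp z)) -> S x -> S y -> h (sub x y) = sub (h x) (h y).
Proof.
move=> hh Sopp Sx Sy; rewrite /sub.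
by case: (hh) => hadd _; rewrite hadd ?(hom_opp hB hh Sopp) //; apply: Sopp.
Qed.

Lemma homS0 (B : alg K) (hB : is_leibniz B) (h : A -> B) (S : A -> Prop) :
  homS S h -> S azero -> h azero = azero.
Proof.
case=> _ [hsc _] S0.
by rewrite -(Lscale0l hA azero) hsc // Lscale0l.
Qed.
End SpanLemmas.


Record good (K : fieldType) (A : alg K) (S N : A -> Prop) : Prop := Good {
  gS0 : S azero;
  gSadd : forall x y, S x -> S y -> S (aadd x y);
  gSsc : forall a x, S x -> S (ascale a x);
  gSbr : forall x y, S x -> S y -> S (abr x y);
  gN0 : N azero;
  gNadd : forall x y, N x -> N y -> N (aadd x y);
  gNsc : forall a x, N x -> N (ascale a x);
  gNS : forall x, N x -> S x;
  gNl : forall x y, N x -> S y -> N (abr x y);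
  gNr : forall x y, S x -> N y -> N (abr x y) }.

Section SQ.
Variable K : fieldType.
Variable A : alg K.
Hypothesis hA : is_leibniz A.
Variables (S N : A -> Prop).
Hypothesis hg : good S N.
Variable hS0 : S azero.

Local Notation Q := (subquot N hS0).
Local Notation mk x := (sq_mk N hS0 x : car (subquot N hS0)).

Lemma gSopp x : S x -> S (aopp x).
Proof. by move=> Sx; rewrite -LscaleN1 //; apply: (gSsc hg). Qed.
Lemma gNopp x : N x -> N (aopp x).
Proof. by move=> Sx; rewrite -LscaleN1 //; apply: (gNsc hg). Qed.

Ltac solveS := repeat first [assumption | apply: (gSadd hg) | apply: (gSsc hg)
   | apply: (gSbr hg) | apply: gSopp | apply: (gS0 hg)].

Lemma rep_spec (c : sq_car S N) : S (sq_rep c) /\ proj1_sig c = cls N (sq_rep c).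
Proof. exact: (proj2_sig (constructive_indefinite_description _ (proj2_sig c))). Qed.

Lemma mk_rep (c : sq_car S N) : mk (sq_rep c) = c.
Proof.
have [Sx e] := rep_spec c; rewrite /sq_mk.
case: excluded_middle_informative => [h|//].
by apply: eq_sig_hprop => [*|/=]; [apply: proof_irrelevance | rewrite e].
Qed.

Lemma cls_eq x y : N (sub x y) -> cls N x = cls N y.
Proof.
move=> H; apply: functional_extensionality => z; apply: propositional_extensionality.
rewrite /cls; split => Hz.
- by rewrite -/(sub z y) (Lsub_trans hA z x y); apply: (gNadd hg).
- rewrite -/(sub z x) (Lsub_trans hA z y x); apply: (gNadd hg) => //.
  by rewrite (Lsub_sym hA); apply: gNopp.
Qed.

Lemma mk_eq x y : S x -> S y -> N (sub x y) -> mk x = mk y.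
Proof.
move=> Sx Sy H; rewrite /sq_mk.
case: excluded_middle_informative => // hx; case: excluded_middle_informative => // hy.
by apply: eq_sig_hprop => [*|/=]; [apply: proof_irrelevance | apply: cls_eq].
Qed.

Lemma mk_inj x y : S x -> S y -> mk x = mk y -> N (sub x y).
Proof.
move=> Sx Sy; rewrite /sq_mk.
case: excluded_middle_informative => // hx; case: excluded_middle_informative => // hy.
move/(f_equal (@proj1_sig _ _)) => /= e.
have : cls N x x by rewrite /cls -/(sub x x) Lsubxx //; apply: (gN0 hg).
by rewrite e.
Qed.

Lemma rep_mk x : S x -> N (sub (sq_rep (mk x)) x).
Proof.
move=> Sx; apply: mk_inj => //; first by case: (rep_spec (mk x)).
exact: mk_rep.
Qed.

Lemma rep_S (c : sq_car S N) : S (sq_rep c).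
Proof. by case: (rep_spec c). Qed.

Lemma mk_zero : (azero : Q) = mk azero.
Proof.
rewrite /sq_mk; case: excluded_middle_informative => h //=.
by apply: eq_sig_hprop => [*|//]; apply: proof_irrelevance.
Qed.

Lemma mk_add x y : S x -> S y -> (aadd (mk x) (mk y) : Q) = mk (aadd x y).
Proof.
move=> Sx Sy; change (mk (aadd (sq_rep (mk x)) (sq_rep (mk y))) = mk (aadd x y)).
apply: mk_eq; try solveS; try exact: rep_S.
by rewrite Lsub_add //; apply: (gNadd hg); apply: rep_mk.
Qed.

Lemma mk_opp x : S x -> (aopp (mk x) : Q) = mk (aopp x).
Proof.
move=> Sx; change (mk (aopp (sq_rep (mk x))) = mk (aopp x)).
apply: mk_eq; try solveS; try exact: rep_S.
by rewrite Lsub_opp //; apply: gNopp; apply: rep_mk.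
Qed.

Lemma mk_scale a x : S x -> (ascale a (mk x) : Q) = mk (ascale a x).
Proof.
move=> Sx; change (mk (ascale a (sq_rep (mk x))) = mk (ascale a x)).
apply: mk_eq; try solveS; try exact: rep_S.
by rewrite Lsub_scale //; apply: (gNsc hg); apply: rep_mk.
Qed.

Lemma mk_br x y : S x -> S y -> (abr (mk x) (mk y) : Q) = mk (abr x y).
Proof.
move=> Sx Sy; change (mk (abr (sq_rep (mk x)) (sq_rep (mk y))) = mk (abr x y)).
apply: mk_eq; try solveS; try exact: rep_S.
rewrite Lsub_br //; apply: (gNadd hg).
  by apply: (gNl hg); [apply: rep_mk | apply: rep_S].
by apply: (gNr hg) => //; apply: rep_mk.
Qed.

Lemma mk_surj (c : Q) : exists x, S x /\ c = mk x.
Proof. by exists (sq_rep c); split; [apply: rep_S | rewrite mk_rep]. Qed.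

Section Transfer.
Variable Q' : alg K.
Variable mk' : A -> Q'.
Hypothesis msurj : forall c, exists x, S x /\ c = mk' x.
Hypothesis m0 : azero = mk' azero.
Hypothesis madd : forall x y, S x -> S y -> aadd (mk' x) (mk' y) = mk' (aadd x y).
Hypothesis mopp : forall x, S x -> aopp (mk' x) = mk' (aopp x).
Hypothesis msc : forall a x, S x -> ascale a (mk' x) = mk' (ascale a x).
Hypothesis mbr : forall x y, S x -> S y -> abr (mk' x) (mk' y) = mk' (abr x y).

Ltac destr c := let x := fresh "x" in let hx := fresh "hx" in
  case: (msurj c) => x [hx ->].
Ltac norm := rewrite ?m0;
  repeat (rewrite madd || rewrite mopp || rewrite msc || rewrite mbr);
  try solveS.

Lemma transfer_leibniz : is_leibniz Q'.
Proof.
split; [|split; [|split; [|split; [|split; [|split; [|split; [|split; [|split; [|split;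
  [|split; [|split]]]]]]]]]]].
- by move=> c d e; destr c; destr d; destr e; norm; rewrite LaddA.
- by move=> c d; destr c; destr d; norm; rewrite LaddC.
- by move=> c; destr c; norm; rewrite Ladd0.
- by move=> c; destr c; norm; rewrite LaddNx.
- by move=> a b c; destr c; norm; rewrite LscaleA.
- by move=> c; destr c; norm; rewrite Lscale1.
- by move=> a c d; destr c; destr d; norm; rewrite LscaleDr.
- by move=> a b c; destr c; norm; rewrite LscaleDl.
- by move=> c d e; destr c; destr d; destr e; norm; rewrite LbrDl.
- by move=> c d e; destr c; destr d; destr e; norm; rewrite LbrDr.
- by move=> a c d; destr c; destr d; norm; rewrite LbrZl.
- by move=> a c d; destr c; destr d; norm; rewrite LbrZr.
- by move=> c d e; destr c; destr d; destr e; norm; rewrite Lleib.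
Qed.
End Transfer.

Lemma sq_leibniz : is_leibniz Q.
Proof.
apply: (@transfer_leibniz Q (fun x => mk x)).
- exact: mk_surj.
- exact: mk_zero.
- exact: mk_add.
- exact: mk_opp.
- exact: mk_scale.
- exact: mk_br.
Qed.

Lemma mk_homS : homS S (fun x => mk x).
Proof.
split; [|split].
- by move=> x y Sx Sy; exact: (esym (mk_add Sx Sy)).
- by move=> a x Sx; exact: (esym (mk_scale a Sx)).
- by move=> x y Sx Sy; exact: (esym (mk_br Sx Sy)).
Qed.

End SQ.


Section Desc.
Variable K : fieldType.
Variable A : alg K.
Hypothesis hA : is_leibniz A.
Variables (S N : A -> Prop).
Hypothesis hg : good S N.
Variable hS0 : S azero.
Variable B : alg K.
Hypothesis hB : is_leibniz B.
Variable h : A -> B.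
Hypothesis hh : homS S h.
Hypothesis hN : forall x, N x -> h x = azero.

Local Notation Q := (subquot N hS0).
Local Notation mk x := (sq_mk N hS0 x : car (subquot N hS0)).

Definition desc (c : Q) : B := h (sq_rep c).

Lemma desc_mk x : S x -> desc (mk x) = h x.
Proof.
move=> Sx; rewrite /desc; apply: (Lsub0_eq hB).
rewrite -(hom_sub hA hB hh (gSopp hA hg) (rep_S (mk x)) Sx).
by apply: hN; apply: (rep_mk hA hg).
Qed.

Lemma desc_hom : is_hom desc.
Proof.
split; [|split; [|split]].
- rewrite (mk_zero N hS0) desc_mk; last exact: (gS0 hg).
  exact: (homS0 hA hB hh (gS0 hg)).
- move=> c d; case: (mk_surj c) => x [Sx ->]; case: (mk_surj d) => y [Sy ->].
  rewrite (mk_add hA hg) // desc_mk; last exact: (gSadd hg Sx Sy).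
  rewrite !desc_mk //.
  by case: hh => H _; apply: H.
- move=> a c; case: (mk_surj c) => x [Sx ->].
  rewrite (mk_scale hA hg) // desc_mk; last exact: (gSsc hg a Sx).
  rewrite !desc_mk //.
  by case: hh => _ [H _]; apply: H.
- move=> c d; case: (mk_surj c) => x [Sx ->]; case: (mk_surj d) => y [Sy ->].
  rewrite (mk_br hA hg) // desc_mk; last exact: (gSbr hg Sx Sy).
  rewrite !desc_mk //.
  by case: hh => _ [_ H]; apply: H.
Qed.

Lemma desc_surj : (forall z, exists x, S x /\ h x = z) -> forall z, exists c, desc c = z.
Proof.
move=> H z; case: (H z) => x [Sx <-]; exists (mk x); exact: desc_mk.
Qed.

Lemma desc_inj : (forall x y, S x -> S y -> h x = h y -> N (sub x y)) -> injective desc.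
Proof.
move=> H c d; case: (mk_surj c) => x [Sx ->]; case: (mk_surj d) => y [Sy ->].
rewrite !desc_mk // => e; apply: (mk_eq hA hg) => //; exact: H.
Qed.
End Desc.

Section Iso.
Variable K : fieldType.

Lemma bij_of (A B : alg K) (f : A -> B) :
  injective f -> (forall z, exists c, f c = z) -> bijective f.
Proof.
move=> inj surj.
pose g z := proj1_sig (constructive_indefinite_description _ (surj z)).
have gK : forall z, f (g z) = z.
  by move=> z; rewrite /g; case: constructive_indefinite_description.
exists g => x; last exact: gK.
by apply: inj; rewrite gK.
Qed.

Lemma iso_sym (A B : alg K) (f : A -> B) : is_hom f -> bijective f -> isomorphic B A.
Proof.
move=> [f0 [fadd [fsc fbr]]] [g fK gK]; exists g; split; last by exists f.
split; [|split; [|split]].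
- by rewrite -f0 fK.
- by move=> x y; rewrite -{1}(gK x) -{1}(gK y) -fadd fK.
- by move=> a x; rewrite -{1}(gK x) -fsc fK.
- by move=> x y; rewrite -{1}(gK x) -{1}(gK y) -fbr fK.
Qed.
End Iso.


Section Generic.
Variable K : fieldType.

Lemma homS_comp (A B C : alg K) (S : A -> Prop) (S' : B -> Prop) (h1 : A -> B) (h2 : B -> C) :
  homS S h1 -> (forall x, S x -> S' (h1 x)) -> homS S' h2 -> homS S (fun x => h2 (h1 x)).
Proof.
case=> [a1 [s1 b1]] HS [a2 [s2 b2]]; split; [|split].
- by move=> x y Sx Sy; rewrite a1 // a2 //; apply: HS.
- by move=> a x Sx; rewrite s1 // s2 //; apply: HS.
- by move=> x y Sx Sy; rewrite b1 // b2 //; apply: HS.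
Qed.

Lemma homS_mono (A B : alg K) (S S' : A -> Prop) (h : A -> B) :
  (forall x, S' x -> S x) -> homS S h -> homS S' h.
Proof.
move=> HS [a1 [s1 b1]]; split; [|split].
- by move=> x y Sx Sy; rewrite a1 //; apply: HS.
- by move=> a x Sx; rewrite s1 //; apply: HS.
- by move=> x y Sx Sy; rewrite b1 //; apply: HS.
Qed.

Lemma good_lie (A : alg K) (hA : is_leibniz A) (P R : A -> Prop) :
  is_ideal P -> is_ideal R -> (forall x, R x -> P x) ->
  good (fun x => P x /\ lie_br (@allA _ A) (@allA _ A) x) (lie_br (@allA _ A) R).
Proof.
move=> hP hR RP; have hR' := hR; have hP' := hP.
case: hP => [[P0 [Padd Psc]] [Pl Pr]]; case: hR => [[R0 [Radd Rsc]] [Rl Rr]].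
split.
- by split => //; apply: span_zero.
- by move=> x y [? ?] [? ?]; split; [apply: Padd | apply: span_add].
- by move=> a x [? ?]; split; [apply: Psc | apply: span_scale].
- move=> x y [? ?] [? ?]; split; first exact: Pr.
  by apply: lie_ideal_r.
- exact: span_zero.
- by move=> *; apply: span_add.
- by move=> *; apply: span_scale.
- move=> x Nx; split; first by apply: RP; apply: (lie_sub_ideal hR' Nx).
  apply: span_mono Nx => z [u [v [_ [_ ->]]]]; by exists u, v.
- by move=> x y Nx _; apply: lie_ideal_r.
- by move=> x y _ Ny; rewrite (br_lie_zero hA x Ny); apply: span_zero.
Qed.

Lemma good_quot (A : alg K) (hA : is_leibniz A) (I : A -> Prop) :
  is_ideal I -> good (@allA _ A) I.
Proof.
case=> [[I0 [Iadd Isc]] [Il Ir]]; split => //.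
- by move=> x y Ix _; apply: Ir.
- by move=> x y _ Iy; apply: Il.
Qed.

Lemma good_sub (A : alg K) (hA : is_leibniz A) (S : A -> Prop) :
  S azero -> (forall x y, S x -> S y -> S (aadd x y)) -> (forall a x, S x -> S (ascale a x)) ->
  (forall x y, S x -> S y -> S (abr x y)) -> good S (fun x => x = azero).
Proof.
move=> S0 Sadd Ssc Sbr; split => //.
- by move=> x y -> ->; rewrite Ladd0.
- by move=> a x ->; rewrite Lscale0r.
- by move=> x ->.
- by move=> x y -> _; rewrite Lbr0l.
- by move=> x y _ ->; rewrite Lbr0r.
Qed.

Lemma key_lemma (A : alg K) (hA : is_leibniz A) (gam : A -> A) (R : A -> Prop) y :
  is_hom gam -> (forall u, R (sub (gam u) u)) ->
  lie_br (@allA _ A) (@allA _ A) y -> lie_br (@allA _ A) R (sub (gam y) y).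
Proof.
case=> [g0 [gadd [gsc gbr]]] HR; elim=> [z [u [v [_ [_ ->]]]]||? ? _ H1 _ H2|? ? _ H].
- rewrite gadd !gbr; have := Lsym_sub hA (gam u) (gam v) u v; rewrite /sym => ->.
  apply: span_add; apply: span_in.
    exists (gam v), (sub (gam u) u); split => //; split => //.
    exact: LaddC.
  by exists u, (sub (gam v) v).
- by rewrite g0 Lsubxx //; apply: span_zero.
- by rewrite gadd Lsub_add //; apply: span_add.
- by rewrite gsc Lsub_scale //; apply: span_scale.
Qed.

Lemma lift_lie (A B : alg K) (h : A -> B) y :
  is_hom h -> (forall z, exists x, h x = z) ->
  lie_br (@allA _ B) (@allA _ B) y -> exists x, lie_br (@allA _ A) (@allA _ A) x /\ h x = y.
Proof.
case=> [h0 [hadd [hsc hbr]]] surj; elim=> [z [u [v [_ [_ ->]]]]||? ? _ [x1 [H1 <-]] _ [x2 [H2 <-]]|a ? _ [x [H <-]]].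
- case: (surj u) => u' <-; case: (surj v) => v' <-.
  exists (aadd (abr u' v') (abr v' u')); split; first by apply: span_in; exists u', v'.
  by rewrite hadd !hbr.
- by exists azero; split; [apply: span_zero | ].
- by exists (aadd x1 x2); split; [apply: span_add | rewrite hadd].
- by exists (ascale a x); split; [apply: span_scale | rewrite hsc].
Qed.

Lemma mk_hom_all (A : alg K) (hA : is_leibniz A) (I : A -> Prop) (hI : is_ideal I) :
  is_hom (fun x => sq_mk I Logic.I x : car (quotient I)).
Proof.
have gI := good_quot hA hI.
split; [|split; [|split]].
- by rewrite -(mk_zero I Logic.I).
- by move=> x y; rewrite (mk_add hA gI).
- by move=> a x; rewrite (mk_scale hA gI).
- by move=> x y; rewrite (mk_br hA gI).
Qed.
End Generic.

Unset Implicit Arguments.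
Set Strict Implicit.
Set Printing Implicit Defensive.
Local Close Scope ring_scope.

Theorem mainTheorem3 (K : fieldType) (hK : (2%:R != 0 :> K)%R)
  (g : alg K) (hg : is_leibniz g) (b : g -> Prop) (hb : is_ideal b)
  (Pg : free_pres g) (Pa : free_pres (quotient b)) :
  exists (q : alg K) (m : q -> Prop) (hm : is_ideal m),
    is_leibniz q /\
    (* (a) [g,g]_Lie ∩ b ≅ q/m *)
    isomorphic
      (@subalg K g (fun x => lie_br (@allA _ g) (@allA _ g) x /\ b x)
         (conj (span_zero _) (ideal_zero hb)))
      (quotient m) /\
    (* (b) m ≅ M^Lie(g) *)
    isomorphic (subalg (ideal_zero hm)) (schur_lie Pg) /\
    (* (c) M^Lie(g/b) is an epimorphic image of q *)
    epimorphic_image_of (schur_lie Pa) q.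
Proof.
have hf : is_leibniz (fp_F Pg) := proj1 (fp_free Pg).
have hpi : is_hom (@fp_pi _ _ Pg) := fp_hom Pg.
have hr : is_ideal (@fp_R _ _ Pg) := ideal_preimage hpi (zero_ideal hg).
have hs : is_ideal (fun x => b (@fp_pi _ _ Pg x)) := ideal_preimage hpi hb.
have RP : forall x, @fp_R _ _ Pg x -> b (@fp_pi _ _ Pg x).
  by move=> x; rewrite /fp_R => ->; apply: (ideal_zero hb).
have gq := good_lie hf hs hr RP.
set Sq := (fun x => _ /\ _) in gq.
set Nq := lie_br _ (@fp_R _ _ Pg) in gq.
have Sq0 : Sq azero := gS0 gq.
pose q := subquot Nq Sq0.
have hq : is_leibniz q := sq_leibniz hf gq Sq0.
have hNpi : forall x, Nq x -> @fp_pi _ _ Pg x = azero.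
  by move=> x Nx; apply: (lie_sub_ideal hr Nx).
pose th := desc (N := Nq) (hS0 := Sq0) (@fp_pi _ _ Pg).
have hth : is_hom th := desc_hom hf gq Sq0 hg (hom_homS Sq hpi) hNpi.
have th_mk : forall x, Sq x -> th (sq_mk Nq Sq0 x) = @fp_pi _ _ Pg x :=
  fun x Sx => desc_mk hf gq Sq0 hg (hom_homS Sq hpi) hNpi Sx.
pose m := fun c : q => th c = azero.
have hm : is_ideal m := ideal_preimage hth (zero_ideal hg).
exists q, m, hm; split; first exact: hq.
split; [|split].
- match goal with |- isomorphic (@subalg _ _ ?S ?h) _ => set SX := S; set hSX := h end.
  have gX : good SX (fun x => x = azero).
    have [[b0 [badd bsc]] [bl br]] := hb.
    apply: good_sub => //.
    + by move=> x y [? ?] [? ?]; split; [apply: span_add | apply: badd].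
    + by move=> a x [? ?]; split; [apply: span_scale | apply: bsc].
    + by move=> x y [? ?] [? ?]; split; [apply: lie_ideal_r | apply: br].
  have hX : is_leibniz (subalg hSX) := sq_leibniz hg gX hSX.
  pose h1 := fun c : q => (sq_mk (S := SX) (fun x => x = azero) hSX (th c) : car (subalg hSX)).
  have thX : forall c, SX (th c).
    move=> c; have [S1 S2] := rep_S c; split => //.
    by apply: (lie_br_hom hpi) S2.
  have hh1 : homS (@allA _ q) h1 :=
    homS_comp (hom_homS _ hth) (fun c _ => thX c) (mk_homS hg gX hSX).
  have gm : good (@allA _ q) m := good_quot hq hm.
  have hN1 : forall c, m c -> h1 c = azero.
    by move=> c; rewrite /h1 /m => ->; exact: (esym (mk_zero _ hSX)).
  apply: (iso_sym (f := desc (N := m) (hS0 := Logic.I) h1)).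
  + exact: (desc_hom hq gm Logic.I hX hh1 hN1).
  + apply: bij_of.
    * apply: (desc_inj hq gm hX hh1 hN1) => c d _ _ e.
      rewrite /m (hom_sub hq hg (hom_homS (@allA _ q) hth) (fun _ _ => Logic.I) Logic.I Logic.I).
      exact: (mk_inj hg gX (thX c) (thX d) e).
    * apply: (desc_surj hq gm Logic.I hX hh1 hN1) => z.
      case: (mk_surj z) => y [Sy ->].
      case: (lift_lie hpi (fp_surj Pg) (proj1 Sy)) => x [Lx ex].
      have Sx : Sq x by split => //; rewrite ex; exact: (proj2 Sy).
      exists (sq_mk Nq Sq0 x); split => //.
      by rewrite /h1 th_mk // ex.
- pose Ss := fun x => @fp_R _ _ Pg x /\ lie_br (@allA _ (fp_F Pg)) (@allA _ (fp_F Pg)) x.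
  have gs : good Ss Nq := good_lie hf hr hr (fun x h => h).
  have SsSq : forall x, Ss x -> Sq x by move=> x [H1 H2]; split => //; apply: RP.
  have gqm : good m (fun c => c = azero).
    have [[m0 [madd msc]] [ml mr]] := hm.
    apply: good_sub => // x y Hx _; exact: mr.
  have hqm : is_leibniz (subalg (ideal_zero hm)) := sq_leibniz hq gqm (ideal_zero hm).
  pose h2 := fun x => (sq_mk (S := m) (fun c => c = azero) (ideal_zero hm) (sq_mk Nq Sq0 x : car q)
     : car (subalg (ideal_zero hm))).
  have mq : forall x, Ss x -> m (sq_mk Nq Sq0 x : car q).
    by move=> x Sx; rewrite /m th_mk; [exact: (proj1 Sx) | exact: SsSq].
  have hh2 : homS Ss h2 :=
    homS_comp (homS_mono SsSq (mk_homS hf gq Sq0)) mq (mk_homS hq gqm (ideal_zero hm)).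
  have hN2 : forall x, Nq x -> h2 x = azero.
    move=> x Nx.
    have e : (sq_mk Nq Sq0 x : car q) = azero.
      rewrite (mk_zero Nq Sq0); apply: (mk_eq hf gq) => //; first exact: (gNS gq).
      by rewrite Lsubx0.
    by rewrite /h2 e; exact: (esym (mk_zero _ _)).
  apply: (iso_sym (f := @desc _ _ Ss Nq _ _ h2)).
  + exact: (desc_hom hf gs _ hqm hh2 hN2).
  + apply: bij_of.
    * apply: (desc_inj hf gs hqm hh2 hN2) => x y Sx Sy e.
      have e1 := mk_inj hq gqm (mq x Sx) (mq y Sy) e.
      exact: (mk_inj hf gq (SsSq x Sx) (SsSq y Sy) (Lsub0_eq hq e1)).
    * apply: (desc_surj hf gs _ hqm hh2 hN2) => z.
      case: (mk_surj z) => c [mc ->].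
      case: (mk_surj c) => x [Sx ec].
      exists x; split; last by rewrite /h2 -ec.
      split; last exact: (proj2 Sx).
      by move: mc; rewrite /m ec th_mk.
- have ga : good (@allA _ g) b := good_quot hg hb.
  have ha : is_leibniz (quotient b) := sq_leibniz hg ga Logic.I.
  pose rho := fun y : g => (sq_mk (S := @allA _ g) b Logic.I y : car (quotient b)).
  have hrho : is_hom rho := mk_hom_all hg hb.
  have hf' : is_leibniz (fp_F Pa) := proj1 (fp_free Pa).
  have hpi' : is_hom (@fp_pi _ _ Pa) := fp_hom Pa.
  have hr' : is_ideal (@fp_R _ _ Pa) := ideal_preimage hpi' (zero_ideal ha).
  pose gen := fun x => proj1_sig (constructive_indefinite_description _
      (fp_surj Pa (rho (@fp_pi _ _ Pg (fp_i x))))).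
  have genP : forall x, @fp_pi _ _ Pa (gen x) = rho (@fp_pi _ _ Pg (fp_i x)).
    by move=> x; rewrite /gen; case: constructive_indefinite_description.
  have [al [[hal alP] _]] := (proj2 (fp_free Pg)) _ hf' gen.
  have comm : forall z, @fp_pi _ _ Pa (al z) = rho (@fp_pi _ _ Pg z).
    have [phi [_ U]] := (proj2 (fp_free Pg)) _ ha (fun x => rho (@fp_pi _ _ Pg (fp_i x))).
    have e1 : phi = (fun z => @fp_pi _ _ Pa (al z)).
      apply: U; split; [exact: hom_comp hal hpi' | by move=> x /=; rewrite alP genP].
    have e2 : phi = (fun z => rho (@fp_pi _ _ Pg z)).
      apply: U; split; [exact: hom_comp hpi hrho | by []].
    by move=> z; have := equal_f (etrans (esym e1) e2) z.
  have surjc : forall y : quotient b, exists w : fp_F Pg, rho (@fp_pi _ _ Pg w) = y.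
    move=> y; case: (fp_surj Pg (sq_rep y)) => w ew; exists w.
    by rewrite /rho ew mk_rep.
  pose gen' := fun x => proj1_sig (constructive_indefinite_description _
      (surjc (@fp_pi _ _ Pa (fp_i x)))).
  have genP' : forall x, rho (@fp_pi _ _ Pg (gen' x)) = @fp_pi _ _ Pa (fp_i x).
    by move=> x; rewrite /gen'; case: constructive_indefinite_description.
  have [be [[hbe beP] _]] := (proj2 (fp_free Pa)) _ hf gen'.
  have commb : forall w, rho (@fp_pi _ _ Pg (be w)) = @fp_pi _ _ Pa w.
    have [phi [_ U]] := (proj2 (fp_free Pa)) _ ha (fun x => @fp_pi _ _ Pa (fp_i x)).
    have e1 : phi = (fun w => rho (@fp_pi _ _ Pg (be w))).
      apply: U; split; [exact: hom_comp (hom_comp hbe hpi) hrho | by move=> x /=; rewrite beP genP'].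
    have e2 : phi = (fun w => @fp_pi _ _ Pa w).
      apply: U; split; [exact: hpi' | by []].
    by move=> w; have := equal_f (etrans (esym e1) e2) w.
  pose SM := fun x => @fp_R _ _ Pa x /\ lie_br (@allA _ (fp_F Pa)) (@allA _ (fp_F Pa)) x.
  pose NM := lie_br (@allA _ (fp_F Pa)) (@fp_R _ _ Pa).
  have gM : good SM NM := good_lie hf' hr' hr' (fun x h => h).
  pose hM0 : SM azero := conj (hom_zero (fp_hom Pa)) (span_zero _).
  have hM : is_leibniz (schur_lie Pa) := sq_leibniz hf' gM hM0.
  have rho0 : forall y, b y -> rho y = azero.
    move=> y By; rewrite (mk_zero b Logic.I); apply: (mk_eq hg ga) => //.
    by rewrite Lsubx0.
  have alSM : forall x, Sq x -> SM (al x).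
    move=> x Sx; split; last by apply: (lie_br_hom hal) (proj2 Sx).
    by rewrite /fp_R comm; apply: rho0; exact: (proj1 Sx).
  pose h3 := fun x => (sq_mk (S := SM) NM hM0 (al x) : car (schur_lie Pa)).
  have hh3 : homS Sq h3 := homS_comp (hom_homS Sq hal) alSM (mk_homS hf' gM hM0).
  have hN3 : forall x, Nq x -> h3 x = azero.
    move=> x Nx.
    have Nal : NM (al x).
      apply: (lie_br_hom hal) Nx => // z rz.
      by rewrite /fp_R comm rz (hom_zero hrho).
    rewrite /h3 (mk_zero NM hM0); apply: (mk_eq hf' gM) => //.
    + exact: (gNS gM).
    + by rewrite Lsubx0.
  exists (desc (N := Nq) (hS0 := Sq0) h3); split.
  + exact: (desc_hom hf gq Sq0 hM hh3 hN3).
  + apply: (desc_surj hf gq Sq0 hM hh3 hN3) => z.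
    case: (mk_surj z) => y [Sy ->].
    have Sby : Sq (be y).
      split; last by apply: (lie_br_hom hbe) (proj2 Sy).
      have e : rho (@fp_pi _ _ Pg (be y)) = rho azero.
        by rewrite commb (proj1 Sy) (hom_zero hrho).
      have := mk_inj hg ga Logic.I Logic.I e.
      by rewrite Lsubx0.
    exists (be y); split => //.
    rewrite /h3; apply: (mk_eq hf' gM) => //; first exact: alSM.
    apply: (key_lemma hf' (hom_comp hbe hal)) (proj2 Sy) => u.
    rewrite /fp_R (hom_sub hf' ha (hom_homS (@allA _ _) hpi') (fun _ _ => Logic.I) Logic.I Logic.I).
    by rewrite comm commb Lsubxx.
Qed.
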